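(* For all finite posets $P$ and $Q$, $$\operatorname{g\text{-}set}(P/Q)=\operatorname{g\text{-}set}(Q)\cup\{\operatorname{mex}_i(\operatorname{g\text{-}set}(Q)) : i\in\operatorname{g\text{-}set}(P)\}.$$
   Context: For a finite poset $P$ and $x\in P$ let $P_x:=\{y\in P: x\not\le y\}$. The g-number is defined recursively by $g(P):=\operatorname{mex}\{g(P_x):x\in P\}$ and the g-set by $\operatorname{g\text{-}set}(P):=\{g(P_x):x\in P\}$, where for a finite $A\subseteq\mathbb N$, $\operatorname{mex}A=\operatorname{mex}_0A$ is the least natural number not in $A$, and $\operatorname{mex}_iA:=\min(\mathbb N\setminus(A\cup\{\operatorname{mex}_0A,\dots,\operatorname{mex}_{i-1}A\}))$ is the $i$-th (0-indexed) least natural number not in $A$. The series union $P/Q$ is the disjoint union of $P$ and $Q$ with their orders kept and every point of $P$ placed above every point of $Q$. *)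

(* Defs.v *)
From mathcomp Require Import all_boot.
Set Implicit Arguments. Unset Strict Implicit. Unset Printing Implicit Defensive.

(* mex s = least natural number not in s (it lies in 0..size s). *)
Definition mex (s : seq nat) : nat :=
  find (fun n => n \notin s) (iota 0 (size s).+1).

Fixpoint mexs (s : seq nat) (i : nat) : seq nat :=
  if i is i'.+1 then rcons (mexs s i') (mex (s ++ mexs s i')) else [::].

Definition mexi (s : seq nat) (i : nat) : nat := mex (s ++ mexs s i).

Definition is_poset (T : Type) (le : rel T) : Prop :=
  [/\ reflexive le, antisymmetric le & transitive le].

Section G.
Variables (T : finType) (le : rel T).

Definition Psub (A : {set T}) (x : T) : {set T} := [set y in A | ~~ le x y].

(* g-number with fuel; with fuel >= #|A| it computes g(A), since #|A_x| < #|A|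
   for x in A. *)
Fixpoint gnum_fuel (n : nat) (A : {set T}) : nat :=
  if n is n'.+1 then mex [seq gnum_fuel n' (Psub A x) | x <- enum A] else 0.

Definition gnum (A : {set T}) : nat := gnum_fuel #|A| A.

Definition gset (A : {set T}) : seq nat := [seq gnum (Psub A x) | x <- enum A].
End G.

(* Series union P/Q on the disjoint union P + Q: every point of P is above
   every point of Q. *)
Definition series_le (TP TQ : Type) (leP : rel TP) (leQ : rel TQ) : rel (TP + TQ) :=
  fun a b =>
    match a, b with
    | inl x, inl y => leP x y
    | inr x, inr y => leQ x y
    | inr _, inl _ => true
    | inl _, inr _ => false
    end.

(* Main.v *)
Require Import Defs.
From mathcomp Require Import all_boot.

Lemma mex_notin s : mex s \notin s.
Proof.
rewrite /mex.
have H : has (fun n => n \notin s) (iota 0 (size s).+1).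
  apply/negPn/negP => /hasPn H.
  have : size (iota 0 (size s).+1) <= size s.
    apply: uniq_leq_size; first exact: iota_uniq.
    by move=> x /H /negPn.
  by rewrite size_iota ltnn.
have := nth_find 0 H.
have Hs : find (fun n => n \notin s) (iota 0 (size s).+1) < (size s).+1.
  by rewrite -[X in _ < X](size_iota 0) -has_find.
by rewrite nth_iota.
Qed.

Lemma mex_lt (s : seq nat) (n : nat) : n < mex s -> n \in s.
Proof.
move=> Hn.
have Hs : mex s <= (size s).+1.
  by rewrite /mex -[X in _ <= X](size_iota 0) find_size.
have := before_find 0 Hn.
rewrite nth_iota ?add0n; last by apply: leq_trans Hs.
by move/negbFE.
Qed.
Arguments mex_lt {s n}.

Lemma mex_unique s k : k \notin s -> (forall n, n < k -> n \in s) -> mex s = k.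
Proof.
move=> Hk Hlt.
case: (ltngtP (mex s) k) => // H.
- by have := Hlt _ H; rewrite (negbTE (mex_notin s)).
- by have := mex_lt H; rewrite (negbTE Hk).
Qed.

Lemma mex_eq s t : s =i t -> mex s = mex t.
Proof.
move=> E; apply: mex_unique; first by rewrite E mex_notin.
by move=> n /mex_lt; rewrite -E.
Qed.

Lemma mex_ge s k : (forall n, n < k -> n \in s) -> k <= mex s.
Proof.
move=> H; rewrite leqNgt; apply/negP => /H; by rewrite (negbTE (mex_notin s)).
Qed.

Lemma mexsE s i : mexs s i = map (mexi s) (iota 0 i).
Proof.
elim: i => [//|i IH]; rewrite [mexs _ _.+1]/=.
by rewrite -addn1 iotaD map_cat IH cats1 /mexi IH.
Qed.

Lemma mexi_notin s i : mexi s i \notin s.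
Proof. by have := mex_notin (s ++ mexs s i); rewrite mem_cat negb_or => /andP[]. Qed.

Lemma mexi_S s i : mexi s i < mexi s i.+1.
Proof.
rewrite /mexi; apply: mex_ge => n Hn.
rewrite mem_cat /= mem_rcons in_cons.
have [->|ne] := eqVneq n (mex (s ++ mexs s i)); first by rewrite orbT.
rewrite ltnS leq_eqVlt (negbTE ne) /= in Hn.
by move: (mex_lt Hn); rewrite mem_cat => /orP[->|->]; rewrite ?orbT.
Qed.

Lemma mexi_lt s i j : i < j -> mexi s i < mexi s j.
Proof.
elim: j => [//|j IH]; rewrite ltnS leq_eqVlt => /orP[/eqP->|/IH H].
  exact: mexi_S.
exact: ltn_trans H (mexi_S s j).
Qed.

Lemma mexi_ltE s i j : (mexi s i < mexi s j) = (i < j).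
Proof.
apply/idP/idP; last exact: mexi_lt.
move=> H; rewrite ltnNge; apply/negP; rewrite leq_eqVlt => /orP[/eqP E|/(mexi_lt s) H'].
  by move: H; rewrite E ltnn.
by have := ltn_trans H H'; rewrite ltnn.
Qed.

Lemma mexi_inj s : injective (mexi s).
Proof.
move=> i j E; case: (ltngtP i j) => // H; have := @mexi_lt s _ _ H; by rewrite E ltnn.
Qed.

Lemma mexi_ge s i : i <= mexi s i.
Proof.
elim: i => // i IH; exact: leq_ltn_trans IH (mexi_S s i).
Qed.

Lemma mexi_surj s n : n \notin s -> exists j, mexi s j = n.
Proof.
move=> Hn.
have H : n < mexi s n.+1 by apply: leq_trans (mexi_ge s n.+1).
move: (mex_lt H); rewrite mem_cat (negbTE Hn) orFb mexsE => /mapP[j _ ->].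
by exists j.
Qed.

Lemma mex_mexi s G t : t =i s ++ map (mexi s) G -> mex t = mexi s (mex G).
Proof.
move=> E; apply: mex_unique.
  rewrite E mem_cat negb_or mexi_notin /=.
  by rewrite mem_map ?mex_notin //; exact: mexi_inj.
move=> n Hn; rewrite E mem_cat.
case Hs: (n \in s) => //=.
have [j Ej] := @mexi_surj s n (negbT Hs).
rewrite -Ej mem_map; last exact: mexi_inj.
by apply: mex_lt; rewrite -(mexi_ltE s) Ej.
Qed.

Section Gen.
Variables (T : finType) (le : rel T).
Hypothesis lerefl : reflexive le.

Lemma card_Psub (A : {set T}) x : x \in A -> #|Psub le A x| < #|A|.
Proof.
move=> Ax; rewrite (cardsD1 x A) Ax add1n ltnS; apply: subset_leq_card.
apply/subsetP => y; rewrite !inE => /andP[Ay nxy]; rewrite Ay andbT.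
by apply/eqP => E; move: nxy; rewrite E lerefl.
Qed.

Lemma enum_card0 (A : {set T}) : #|A| = 0 -> enum A = [::].
Proof. by move=> H; apply: size0nil; rewrite -cardE H. Qed.

Lemma gnum_fuelE n m (A : {set T}) : #|A| <= n -> #|A| <= m -> gnum_fuel le n A = gnum_fuel le m A.
Proof.
elim: n m A => [|n IH] [|m] A //= HA HB.
- by rewrite (@enum_card0 A) //; apply/eqP; rewrite -leqn0.
- by rewrite (@enum_card0 A) //; apply/eqP; rewrite -leqn0.
- congr mex; apply/eq_in_map => x; rewrite mem_enum => Ax.
  have := @card_Psub A x Ax => H.
  by apply: IH; rewrite -ltnS; apply: leq_trans H _.
Qed.

Lemma gnumE (A : {set T}) : gnum le A = mex [seq gnum le (Psub le A x) | x <- enum A].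
Proof.
rewrite /gnum (@gnum_fuelE _ #|A|.+1) //=.
congr mex; apply/eq_in_map => x; rewrite mem_enum => Ax.
apply: gnum_fuelE => //; exact: ltnW (@card_Psub A x Ax).
Qed.
End Gen.

Section Ser.
Variables (TP TQ : finType) (leP : rel TP) (leQ : rel TQ).
Hypothesis (rP : reflexive leP) (rQ : reflexive leQ).
Local Notation R := (series_le leP leQ).
Lemma rR : reflexive R.
Proof. by case=> x /=. Qed.

Definition U (B : {set TP}) (C : {set TQ}) : {set TP + TQ} :=
  [set z | match z with inl x => x \in B | inr y => y \in C end].

Lemma PsubL B C x : Psub R (U B C) (inl x) = U (Psub leP B x) C.
Proof. by apply/setP => [[y|y]]; rewrite !inE //= andbT. Qed.

Lemma PsubR B C y : Psub R (U B C) (inr y) = U set0 (Psub leQ C y).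
Proof. by apply/setP => [[z|z]]; rewrite !inE //= andbF. Qed.

Lemma gnumQ C : gnum R (U set0 C) = gnum leQ C.
Proof.
move: {2}#|C|.+1 (ltnSn #|C|) => k; elim: k C => [//|k IH] C HC.
rewrite (gnumE _ _ rR) (gnumE _ _ rQ); apply: mex_eq => n.
apply/mapP/mapP => [[[x|y]]|[y]]; rewrite mem_enum ?inE // => Cy ->.
- exists y; rewrite ?mem_enum // PsubR IH //.
  exact: leq_trans (card_Psub _ _ rQ _ _ Cy) HC.
- exists (inr y); rewrite ?mem_enum ?inE // PsubR IH //.
  exact: leq_trans (card_Psub _ _ rQ _ _ Cy) HC.
Qed.

Lemma gnumPQ B C : gnum R (U B C) = mexi (gset leQ C) (gnum leP B).
Proof.
move: {2}#|B|.+1 (ltnSn #|B|) => k; elim: k B => [//|k IH] B HB.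
rewrite (gnumE _ _ rR) [gnum leP B](gnumE _ _ rP); apply: mex_mexi => n.
rewrite mem_cat; apply/mapP/orP => [[[x|y]]|].
- rewrite mem_enum inE => Bx ->; right; rewrite PsubL IH.
    by apply: map_f; apply: map_f; rewrite mem_enum ?inE.
  exact: leq_trans (card_Psub _ _ rP _ _ Bx) HB.
- rewrite mem_enum inE => Cy ->; left; rewrite PsubR gnumQ.
  by apply: map_f; rewrite mem_enum ?inE.
- case=> [/mapP[y]|/mapP[m /mapP[x]]]; rewrite mem_enum.
  + move=> Cy ->; exists (inr y); first by rewrite mem_enum inE.
    by rewrite PsubR gnumQ.
  + move=> Bx -> ->; exists (inl x); first by rewrite mem_enum inE.
    rewrite PsubL IH //.
    exact: leq_trans (card_Psub _ _ rP _ _ Bx) HB.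
Qed.

Lemma gsetPQ : gset R [set: TP + TQ] =i [pred n | (n \in gset leQ [set: TQ])
               || (n \in [seq mexi (gset leQ [set: TQ]) i | i <- gset leP [set: TP]])].
Proof.
move=> n; rewrite !inE.
have E : [set: TP + TQ] = U setT setT by apply/setP => [[x|y]]; rewrite !inE.
rewrite [in X in X = _]E; apply/mapP/orP => [[[x|y]]|].
- move=> _ ->; right; rewrite PsubL gnumPQ.
  by apply: map_f; apply: map_f; rewrite mem_enum inE.
- move=> _ ->; left; rewrite PsubR gnumQ.
  by apply: map_f; rewrite mem_enum ?inE.
- case=> [/mapP[y]|/mapP[m /mapP[x]]].
  + move=> _ ->; exists (inr y); first by rewrite mem_enum inE.
    by rewrite PsubR gnumQ.
  + move=> _ -> ->; exists (inl x); first by rewrite mem_enum inE.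
    by rewrite PsubL gnumPQ.
Qed.
End Ser.

Theorem mainTheorem6 (TP TQ : finType) (leP : rel TP) (leQ : rel TQ)
  (hP : is_poset leP) (hQ : is_poset leQ) :
  gset (series_le leP leQ) [set: TP + TQ]
  =i [pred n | (n \in gset leQ [set: TQ])
               || (n \in [seq mexi (gset leQ [set: TQ]) i | i <- gset leP [set: TP]])].
Proof.
case: hP => rP _ _; case: hQ => rQ _ _.
exact: gsetPQ rP rQ.
Qed.
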